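(* Let $n$ be even and $F\colon\mathbb F_2^n\to\mathbb F_2^n$ a quadratic APN function with amplitude distribution $[0^{k_0},2^{k_2},\dots,n^{k_n}]$. Then (i) $\sum_{i=1}^{n/2}k_{2i}(2^{2i}-1)=2^n-1$; (ii) if $i>n/2$ then $k_i\le1$; (iii) if $i\neq j$ and $k_i,k_j\ge1$, then $i+j\le n$.
   Context: $\langle\cdot,\cdot\rangle$ is the standard dot product. $F$ is APN if for every $a\ne0$ and $c$, $F(x)+F(x+a)=c$ has at most 2 solutions; quadratic if each component $F_b(x)=\langle b,F(x)\rangle$ is a quadratic form plus an affine function. For quadratic $F$ and fixed $b$ there is $k$ with $|W_F(b,a)|\in\{0,2^{(n+k)/2}\}$ for all $a$, where $W_F(b,a)=\sum_x(-1)^{F_b(x)+\langle x,a\rangle}$; $2^{(n+k)/2}$ is the amplitude of $F_b$. The amplitude distribution $[0^{k_0},1^{k_1},\dots,n^{k_n}]$ means exactly $k_i$ nonzero $b$ give amplitude $2^{(n+i)/2}$ (here only even $i$ occur). *)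

(* Defs.v *)
From mathcomp Require Import all_boot all_order all_algebra.
Set Implicit Arguments. Unset Strict Implicit. Unset Printing Implicit Defensive.
Import Order.TTheory GRing.Theory Num.Theory.
Local Open Scope ring_scope.

Notation vec n := 'rV['F_2]_n.

Definition dot (n : nat) (u v : vec n) : 'F_2 := \sum_(i < n) u 0 i * v 0 i.

Definition comp (n : nat) (F : vec n -> vec n) (b : vec n) (x : vec n) : 'F_2 :=
  dot b (F x).

Definition APN (n : nat) (F : vec n -> vec n) : Prop :=
  forall a c : vec n, a != 0 ->
    (#|[set x : vec n | (F x + F (x + a) == c)%R]| <= 2)%N.

Definition quad_plus_affine (n : nat) (f : vec n -> 'F_2) : Prop :=
  exists (Q : 'I_n -> 'I_n -> 'F_2) (l : 'I_n -> 'F_2) (e : 'F_2),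
    forall x : vec n,
      f x = \sum_(i < n) \sum_(j < n) Q i j * x 0 i * x 0 j
            + \sum_(i < n) l i * x 0 i + e.

Definition quadratic (n : nat) (F : vec n -> vec n) : Prop :=
  forall b : vec n, quad_plus_affine (comp F b).

Definition sgn (v : 'F_2) : int := if v == 0 then 1 else -1.

Definition walsh (n : nat) (F : vec n -> vec n) (b a : vec n) : int :=
  \sum_(x : vec n) sgn (comp F b x + dot x a).

(* F_b has amplitude 2^((n+k)/2): |W_F(b,a)| in {0, 2^((n+k)/2)} for all a,
   with the value 2^((n+k)/2) attained (expressed with squares to stay in int) *)
Definition has_amplitude (n : nat) (F : vec n -> vec n) (b : vec n) (k : nat) : bool :=
  [forall a : vec n, (walsh F b a ^+ 2 == 0) || (walsh F b a ^+ 2 == (2 ^ (n + k))%:Z)]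
  && [exists a : vec n, walsh F b a ^+ 2 == (2 ^ (n + k))%:Z].

Definition ampl_count (n : nat) (F : vec n -> vec n) (i : nat) : nat :=
  #|[set b : vec n | (b != 0) && has_amplitude F b i]|.

(* Main.v *)
Require Import Defs.
From mathcomp Require Import all_boot all_order all_algebra.
From mathcomp Require Import ring zify.
Set Implicit Arguments. Unset Strict Implicit. Unset Printing Implicit Defensive.
Import Order.TTheory GRing.Theory Num.Theory.
Local Open Scope ring_scope.

Lemma F2_ind (P : 'F_2 -> Prop) : P 0 -> P 1 -> forall x, P x.
Proof.
move=> H0 H1 [[|[|//]]] Hx.
  by have -> : Ordinal Hx = 0 by apply/val_inj.
by have -> : Ordinal Hx = 1 by apply/val_inj.
Qed.

Ltac f2_atoms :=
  repeat match goal with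
  | |- context [?t] =>
     let _ := constr:(t : 'F_2) in
     lazymatch t with
     | (_ + _)%R => fail
     | 0%R => fail
     | 1%R => fail
     | _ => let z := fresh "z" in set z := t; clearbody z; revert z; apply: F2_ind
     end
  end.

Ltac f2_solve :=
  f2_atoms; first [done | by apply/eqP].

Ltac f2_imp :=
  let H := fresh "H" in
  move=> /eqP H; apply/eqP; move: H; apply/implyP; f2_atoms; by [].

Lemma sgnD (p q : 'F_2) : sgn (p + q) = sgn p * sgn q.
Proof. by elim/F2_ind: p; elim/F2_ind: q. Qed.

Lemma sgn0 : sgn 0 = 1. Proof. by []. Qed.

Lemma sgnN0 (p : 'F_2) : p != 0 -> sgn p = -1.
Proof. by rewrite /sgn => /negbTE ->. Qed.

Lemma addvv n (v : vec n) : v + v = 0.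
Proof. apply/rowP => i; rewrite !mxE; f2_solve. Qed.

Lemma oppv n (v : vec n) : - v = v.
Proof. by apply/eqP; rewrite eq_sym -subr_eq0 opprK addvv. Qed.

Lemma dotDr n (b v w : vec n) : dot b (v + w) = dot b v + dot b w.
Proof. by rewrite /dot -big_split; apply: eq_bigr => i _; rewrite mxE mulrDr. Qed.

Lemma dotDl n (b v w : vec n) : dot (v + w) b = dot v b + dot w b.
Proof. by rewrite /dot -big_split; apply: eq_bigr => i _; rewrite mxE mulrDl. Qed.

Lemma dotC n (v w : vec n) : dot v w = dot w v.
Proof. by rewrite /dot; apply: eq_bigr => i _; rewrite mulrC. Qed.

Lemma dot0r n (v : vec n) : dot v 0 = 0.
Proof. by rewrite /dot big1 // => i _; rewrite mxE mulr0. Qed.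

Lemma dot_delta n (i : 'I_n) (d : vec n) : dot (delta_mx 0 i) d = d 0 i.
Proof.
rewrite /dot (bigD1 i) //= big1 ?addr0 => [|j /negbTE Hj]; rewrite mxE eqxx ?Hj /=.
  by rewrite eqxx mul1r.
by rewrite mul0r.
Qed.

Lemma card_vec n : #|{: vec n}| = (2 ^ n)%N.
Proof. by rewrite card_mx card_Fp // mul1n. Qed.

Lemma charsum n (V : {set vec n}) (chi : vec n -> 'F_2) :
  (forall u v, u \in V -> v \in V -> u + v \in V) ->
  (forall u v, u \in V -> v \in V -> chi (u + v) = chi u + chi v) ->
  \sum_(u in V) sgn (chi u) = if [forall u in V, chi u == 0] then (#|V|)%:Z else 0.
Proof.
move=> HV Hchi; case: ifP => [/forall_inP H|].
  rewrite (eq_bigr (fun _ => 1)) => [|u /H /eqP ->//].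
  by rewrite sumr_const natz.
move/negbT/forall_inPn => [u0 Hu0 Hc].
set S := \sum_(u in V) _.
have HS : S = - S.
  rewrite {1}/S (reindex_inj (addIr u0)) /=.
  rewrite (eq_bigl (fun u => u \in V)) => [|u].
    rewrite /S -sumrN; apply: eq_bigr => u Hu.
    by rewrite Hchi // sgnD (sgnN0 Hc) mulrN1.
  apply/idP/idP => [H|H]; last exact: HV.
  by rewrite -[u]addr0 -(addvv u0) addrA HV.
have : S + S = 0 by rewrite {1}HS addNr.
by rewrite -mulr2n => /eqP; rewrite mulrn_eq0 /= => /eqP.
Qed.

Lemma charsumT n (h : vec n -> 'F_2) : (forall x y, h (x + y) = h x + h y) ->
  \sum_x sgn (h x) = if [forall x, h x == 0] then (2 ^ n)%:Z else 0.
Proof.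
move=> Hh; have := @charsum n setT h (fun _ _ _ _ => in_setT _) (fun u v _ _ => Hh u v).
have -> : \sum_(x in [set: vec n]) sgn (h x) = \sum_x sgn (h x).
  by apply: eq_bigl => x; rewrite in_setT.
rewrite cardsT card_vec => ->.
case: ifP => [/forall_inP H|/negbT/forall_inPn [u _ Hu]].
  by rewrite ifT //; apply/forallP => x; apply: H; rewrite in_setT.
by rewrite ifF //; apply/negbTE/forallPn; exists u.
Qed.

Lemma sum_if (T : finType) (A : {set T}) (c : int) :
  \sum_(x : T) (if x \in A then c else 0) = c * (#|A|)%:Z.
Proof. by rewrite -big_mkcond sumr_const -mulr_natr natz. Qed.

Lemma dot_forall0 n (u : vec n) : [forall a, dot u a == 0] = (u == 0).
Proof.
apply/forallP/eqP => [H|-> a]; last by rewrite dotC dot0r.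
apply/rowP => i; have /eqP := H (delta_mx 0 i).
by rewrite dotC dot_delta mxE.
Qed.

Definition G n (f : vec n -> 'F_2) (x u : vec n) := f (x + u) + f x + f u + f 0.

Lemma GC n (f : vec n -> 'F_2) x u : G f x u = G f u x.
Proof. rewrite /G (addrC u x); f2_solve. Qed.

Lemma quadG n (f : vec n -> 'F_2) : quad_plus_affine f ->
  forall x y u, G f (x + y) u = G f x u + G f y u.
Proof.
move=> [Q [l [e Hf]]].
pose q (x : vec n) := \sum_(i < n) \sum_(j < n) Q i j * x 0 i * x 0 j.
pose L (x : vec n) := \sum_(i < n) l i * x 0 i.
pose be (x u : vec n) := \sum_(i < n) \sum_(j < n) Q i j * (x 0 i * u 0 j + u 0 i * x 0 j).
have Hf' x : f x = q x + L x + e by rewrite Hf.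
have Hq x u : q (x + u) = q x + q u + be x u.
  rewrite /q /be -!big_split; apply: eq_bigr => i _ /=.
  rewrite -!big_split; apply: eq_bigr => j _ /=; rewrite !mxE; ring.
have HL x u : L (x + u) = L x + L u.
  by rewrite /L -big_split; apply: eq_bigr => i _ /=; rewrite !mxE mulrDr.
have Hq0 : q 0 = 0 by rewrite /q big1 // => i _; rewrite big1 // => j _; rewrite !mxE mulr0.
have HL0 : L 0 = 0 by rewrite /L big1 // => i _; rewrite !mxE mulr0.
have HG x u : G f x u = be x u.
  rewrite /G !Hf' Hq HL Hq0 HL0; f2_solve.
have Hbe x y u : be (x + y) u = be x u + be y u.
  rewrite /be -!big_split; apply: eq_bigr => i _ /=.
  rewrite -!big_split; apply: eq_bigr => j _ /=; rewrite !mxE; ring.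
by move=> x y u; rewrite !HG Hbe.
Qed.

Definition Vset n (f : vec n -> 'F_2) := [set u : vec n | [forall x, G f x u == 0]].
Definition chi n (f : vec n -> 'F_2) (a u : vec n) := f u + f 0 + dot u a.
Definition Pa n (f : vec n -> 'F_2) (a : vec n) := [forall u in Vset f, chi f a u == 0].

Definition additiveG n (f : vec n -> 'F_2) :=
  forall x y u, G f (x + y) u = G f x u + G f y u.

Lemma V_closed n (f : vec n -> 'F_2) : additiveG f ->
  forall u v, u \in Vset f -> v \in Vset f -> u + v \in Vset f.
Proof.
move=> Hf u v; rewrite !inE => /forallP Hu /forallP Hv; apply/forallP => x.
by rewrite GC Hf GC (eqP (Hu x)) GC (eqP (Hv x)) addr0.
Qed.

Lemma V0 n (f : vec n -> 'F_2) : 0 \in Vset f.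
Proof. rewrite inE; apply/forallP => x; rewrite /G addr0; f2_solve. Qed.

Lemma chi_add n (f : vec n -> 'F_2) a u v : u \in Vset f -> v \in Vset f ->
  chi f a (u + v) = chi f a u + chi f a v.
Proof.
move=> _; rewrite inE => /forallP /(_ u) /eqP; rewrite /G /chi dotDl.
f2_imp.
Qed.

Lemma walsh_sq n (F : vec n -> vec n) b a : additiveG (Defs.comp F b) ->
  walsh F b a ^+ 2 = (2 ^ n)%:Z * (if Pa (Defs.comp F b) a then (#|Vset (Defs.comp F b)|)%:Z else 0).
Proof.
move=> Hf; set f := Defs.comp F b.
have -> : walsh F b a ^+ 2 =
   \sum_u (\sum_x sgn (G f x u)) * sgn (chi f a u).
  rewrite expr2 /walsh mulr_suml.
  under eq_bigr => x _ do rewrite mulr_sumr (reindex_inj (addrI x)).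
  rewrite exchange_big /=; apply: eq_bigr => u _; rewrite mulr_suml.
  apply: eq_bigr => x _; rewrite -!sgnD; congr sgn.
  rewrite /G /chi -/f dotDl; f2_solve.
have Hs u : \sum_x sgn (G f x u) = if u \in Vset f then (2^n)%:Z else 0.
  by rewrite (@charsumT n (fun x => G f x u)) ?inE // => x y; exact: Hf.
rewrite (eq_bigr (fun u => (2^n)%:Z * (if u \in Vset f then sgn (chi f a u) else 0))) => [|u _]; last first.
  by rewrite Hs; case: ifP; rewrite ?mul0r ?mulr0.
rewrite -mulr_sumr -big_mkcond charsum //; first exact: V_closed.
by move=> u v; apply: chi_add.
Qed.

Lemma countPa n (f : vec n -> 'F_2) : additiveG f ->
  (#|[set a | Pa f a]| * #|Vset f| = 2 ^ n)%N.
Proof.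
move=> Hf.
have E : \sum_a \sum_(u in Vset f) sgn (chi f a u) = (#|[set a | Pa f a]| * #|Vset f|)%:Z.
  rewrite (eq_bigr (fun a => if a \in [set a | Pa f a] then (#|Vset f|)%:Z else 0)) => [|a _].
    by rewrite sum_if PoszM mulrC.
  by rewrite inE charsum //; [exact: V_closed | move=> u v; apply: chi_add].
have Hd (u : vec n) : \sum_a sgn (dot u a) = if u == 0 then (2^n)%:Z else 0.
  by rewrite (@charsumT n (dot u)) ?dot_forall0 // => x y; exact: dotDr.
have E2 : \sum_a \sum_(u in Vset f) sgn (chi f a u) = (2^n)%:Z.
  rewrite exchange_big /=.
  rewrite (eq_bigr (fun u => sgn (f u + f 0) * (if u == 0 then (2^n)%:Z else 0))) => [|u _]; last first.
    by rewrite -Hd mulr_sumr; apply: eq_bigr => a _; rewrite /chi sgnD.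
  rewrite (bigD1 0) ?V0 //= big1 => [|u /andP [_ /negbTE ->]]; last by rewrite mulr0.
  have -> : f 0 + f 0 = 0 by f2_solve.
  by rewrite eqxx sgn0 mul1r addr0.
by apply/eqP; rewrite -eqz_nat -E E2.
Qed.

Lemma amp_card n (F : vec n -> vec n) b k : additiveG (Defs.comp F b) ->
  has_amplitude F b k -> #|Vset (Defs.comp F b)| = (2 ^ k)%N.
Proof.
move=> Hf /andP [_ /existsP [a /eqP]]; rewrite walsh_sq //.
case: ifP => _; last first.
  rewrite mulr0 => /eqP; rewrite eq_sym eqz_nat expn_eq0 //.
rewrite -PoszM => /eqP; rewrite eqz_nat expnD eqn_mul2l expn_eq0 /= => /eqP //.
Qed.

Lemma amp_parity n (F : vec n -> vec n) b k :
  has_amplitude F b k -> ~~ odd (n + k).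
Proof.
move=> /andP [_ /existsP [a /eqP H]].
have := congr1 absz H; rewrite abszX absz_nat => H2.
have := congr1 (logn 2) H2; rewrite lognX pfactorK // => <-.
by rewrite oddM.
Qed.

Lemma amp_exists n (F : vec n -> vec n) b : additiveG (Defs.comp F b) ->
  exists2 k, (k <= n)%N & has_amplitude F b k.
Proof.
move=> Hf; have Hc := countPa Hf.
have : (#|Vset (Defs.comp F b)| %| 2 ^ n)%N by rewrite -Hc dvdn_mull.
case/dvdn_pfactor => // k Hk HV; exists k => //.
have : (0 < #|[set a | Pa (Defs.comp F b) a]|)%N.
  by rewrite lt0n; apply/eqP => H0; move: Hc; rewrite H0 mul0n => /esym/eqP; rewrite expn_eq0.
case/card_gt0P => a0; rewrite inE => Ha0.
apply/andP; split.
  apply/forallP => a; rewrite walsh_sq //; case: ifP => _; first by rewrite HV -PoszM -expnD eqxx orbT.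
  by rewrite mulr0 eqxx.
by apply/existsP; exists a0; rewrite walsh_sq // Ha0 HV -PoszM -expnD.
Qed.

Definition Dv n (F : vec n -> vec n) (x u : vec n) := F (x + u) + F x + F u + F 0.
Definition Aset n (F : vec n -> vec n) u := [set c : vec n | [forall x, dot c (Dv F x u) == 0]].
Definition Zset n (F : vec n -> vec n) u := [set x : vec n | Dv F x u == 0].

Lemma GD n (F : vec n -> vec n) b x u : G (Defs.comp F b) x u = dot b (Dv F x u).
Proof. by rewrite /G /Defs.comp /Dv !dotDr. Qed.

Lemma inV_A n (F : vec n -> vec n) b u :
  (u \in Vset (Defs.comp F b)) = (b \in Aset F u).
Proof. by rewrite !inE; apply: eq_forallb => x; rewrite GD. Qed.

Lemma cardAZ n (F : vec n -> vec n) u : quadratic F -> #|Aset F u| = #|Zset F u|.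
Proof.
move=> Hq.
have Hx (c : vec n) : \sum_x sgn (dot c (Dv F x u)) = if c \in Aset F u then (2^n)%:Z else 0.
  rewrite (@charsumT n (fun x => dot c (Dv F x u))) ?inE // => x y.
  by rewrite -!GD; apply: quadG.
have Hc (x : vec n) : \sum_c sgn (dot c (Dv F x u)) = if x \in Zset F u then (2^n)%:Z else 0.
  rewrite (@charsumT n (fun c => dot c (Dv F x u))) ?inE; last by move=> c d; rewrite dotDl.
  rewrite -dot_forall0; congr (if _ then _ else _); apply: eq_forallb => c; by rewrite dotC.
have E : \sum_(c : vec n) \sum_(x : vec n) sgn (dot c (Dv F x u))
       = \sum_(x : vec n) \sum_(c : vec n) sgn (dot c (Dv F x u)) by rewrite exchange_big.
rewrite (eq_bigr _ (fun c _ => Hx c)) (eq_bigr _ (fun x _ => Hc x)) !sum_if in E.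
by apply/eqP; move: E => /eqP; rewrite -!PoszM eqz_nat eqn_mul2l expn_eq0.
Qed.

Lemma cardZ n (F : vec n -> vec n) u : APN F -> u != 0 -> #|Zset F u| = 2%N.
Proof.
move=> Hapn Hu; apply/eqP; rewrite eqn_leq; apply/andP; split.
  apply: leq_trans (Hapn u (F u + F 0) Hu); apply: subset_leq_card.
  apply/subsetP => x; rewrite !inE /Dv => /eqP /rowP H; apply/eqP/rowP => i.
  move: (H i); rewrite !mxE; f2_imp.
apply: (@leq_trans #|[set (0 : vec n); u]|); first by rewrite cards2 eq_sym Hu.
apply: subset_leq_card; apply/subsetP => x; rewrite !inE => /orP [] /eqP ->;
  apply/eqP/rowP => i; rewrite /Dv ?add0r ?addvv !mxE; f2_solve.
Qed.

Lemma core n (F : vec n -> vec n) (b b' u : vec n) : quadratic F -> APN F ->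
  b != 0 -> b' != 0 -> b != b' ->
  u \in Vset (Defs.comp F b) -> u \in Vset (Defs.comp F b') -> u = 0.
Proof.
move=> Hq Hapn Hb Hb' Hbb; rewrite !inV_A => H1 H2.
apply/eqP; apply/negP => /negP Hu.
have := cardAZ u Hq; rewrite cardZ // => HA.
have : (#|((0 : vec n)%R |: [set b; b'])| <= #|Aset F u|)%N.
  apply: subset_leq_card; apply/subsetP => c; rewrite !inE -?orbA => /or3P [] /eqP ->;
  [by apply/forallP => x; rewrite dotC dot0r | by move: H1; rewrite inE | by move: H2; rewrite inE].
rewrite HA cardsU1 cards2 !inE Hbb negb_or !(eq_sym 0) Hb Hb'.
by [].
Qed.

Lemma inter_card n (V W : {set vec n}) :
  (forall u v, u \in V -> v \in V -> u + v \in V) ->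
  (forall u v, u \in W -> v \in W -> u + v \in W) ->
  (forall w, w \in V -> w \in W -> w = 0) -> (#|V| * #|W| <= 2 ^ n)%N.
Proof.
move=> HV HW H0; rewrite -cardsX -(@card_in_imset _ _ (fun p => p.1 + p.2)).
  by rewrite -card_vec max_card.
move=> [p1 p2] [q1 q2]; rewrite !inE /= => /andP [Hp1 Hp2] /andP [Hq1 Hq2] E.
have E' : p1 + q1 = p2 + q2.
  apply/rowP => i; move/rowP: E => /(_ i); rewrite !mxE; f2_imp.
have Hw := H0 _ (HV _ _ Hp1 Hq1); rewrite E' in Hw.
have /eqP := Hw (HW _ _ Hp2 Hq2); rewrite -E' !addr_eq0 !oppv => /eqP -> .
by move: (Hw (HW _ _ Hp2 Hq2)) => /eqP; rewrite addr_eq0 oppv => /eqP ->.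
Qed.

Lemma reidx (g : nat -> nat) m : (forall i, odd i -> g i = 0%N) ->
  (\sum_(0 <= i < (2 * m).+1) g i = g 0%N + \sum_(1 <= i < m.+1) g (2 * i)%N)%N.
Proof.
move=> Hg; elim: m => [|m IH].
  by rewrite muln0 big_nat1 big_geq // addn0.
rewrite (_ : (2 * m.+1).+1 = ((2 * m).+1).+2)%N; last lia.
rewrite big_nat_recr //= [X in (X + _)%N = _]big_nat_recr //= [X in _ = (_ + X)%N]big_nat_recr //= IH.
rewrite (Hg (2 * m).+1) /=; last by rewrite oddM.
rewrite addn0 addnA; congr (_ + _)%N; congr g; lia.
Qed.

Lemma card_sum1 (T : finType) (A : {set T}) : #|A| = (\sum_(x : T) (x \in A))%N.
Proof. by rewrite -sum1_card big_mkcond /=; apply: eq_bigr => x _; case: (x \in A). Qed.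

Lemma sumV n (F : vec n -> vec n) : quadratic F -> APN F ->
  (\sum_(b : vec n) #|Vset (Defs.comp F b)| = 2 ^ n + (2 ^ n - 1) * 2)%N.
Proof.
move=> Hq Hapn.
rewrite (eq_bigr _ (fun b _ => card_sum1 (Vset (Defs.comp F b)))) exchange_big /=.
rewrite (eq_bigr (fun u => #|Zset F u|)) => [|u _]; last first.
  by rewrite -cardAZ // card_sum1; apply: eq_bigr => b _; rewrite inV_A.
rewrite (bigD1 0) //=.
have -> : Zset F 0 = setT by apply/setP => x; rewrite !inE /Dv addr0 addvv add0r addvv eqxx.
rewrite cardsT card_vec (eq_bigr (fun _ => 2%N)) => [|u Hu]; last exact: cardZ.
by rewrite sum_nat_const cardC1 card_vec subn1.
Qed.

Lemma Vb_sum n (F : vec n -> vec n) b : quadratic F ->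
  (#|Vset (Defs.comp F b)| = 1 + \sum_(i < n.+1) has_amplitude F b i * (2 ^ i - 1))%N.
Proof.
move=> Hq; have Hf := quadG (Hq b).
case: (amp_exists Hf) => k Hk Ha; have HV := amp_card Hf Ha.
have Hk' : (k < n.+1)%N by [].
rewrite (bigD1 (Ordinal Hk')) //= Ha big1 => [|i /negbTE Hi].
  by rewrite HV mul1n addn0 subnKC // expn_gt0.
case Hai: (has_amplitude F b i) => //.
have := amp_card Hf Hai; rewrite HV => /eqP; rewrite eqn_exp2l // => /eqP Eik.
by move: Hi; rewrite -(inj_eq val_inj) /= Eik eqxx.
Qed.

Lemma dot0l n (v : vec n) : dot 0 v = 0.
Proof. by rewrite dotC dot0r. Qed.

Theorem mainTheorem5 (n : nat) (F : vec n -> vec n) :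
  ~~ odd n -> quadratic F -> APN F ->
  [/\ (\sum_(1 <= i < (n %/ 2).+1) ampl_count F (2 * i) * (2 ^ (2 * i) - 1) = 2 ^ n - 1)%N,
      (forall i : nat, (n %/ 2 < i)%N -> (ampl_count F i <= 1)%N)
    & (forall i j : nat, i <> j -> (1 <= ampl_count F i)%N -> (1 <= ampl_count F j)%N ->
         (i + j <= n)%N)].
Proof.
move=> Hev Hq Hapn.
have Hf b := quadG (Hq b).
have Hpar i : odd i -> ampl_count F i = 0%N.
  move=> Hi; apply/eqP; rewrite cards_eq0; apply/eqP/setP => b; rewrite !inE.
  apply/negbTE; apply/negP => /andP [_ Ha]; have := amp_parity Ha.
  by rewrite oddD Hi; move: Hev; case: (odd n).
have Hcnt i : ampl_count F i = (\sum_(b : vec n | b != 0%R) has_amplitude F b i)%N.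
  rewrite /ampl_count card_sum1 [RHS]big_mkcond; apply: eq_bigr => b _; rewrite inE.
  by case: (b != 0).
split.
- have Htot := sumV Hq Hapn; rewrite (bigD1 0) //= in Htot.
  have HV0 : Vset (Defs.comp F 0) = setT.
    apply/setP => u; rewrite !inE; apply/forallP => x.
    by rewrite /G /Defs.comp !dot0l !addr0.
  rewrite HV0 cardsT card_vec in Htot.
  rewrite (eq_bigr _ (fun b _ => Vb_sum b Hq)) big_split /= sum_nat_const in Htot.
  rewrite cardC1 card_vec muln1 exchange_big /= in Htot.
  rewrite (eq_bigr (fun i : 'I_n.+1 => ampl_count F i * (2 ^ i - 1))%N) in Htot; last first.
    by move=> i _; rewrite -big_distrl /= Hcnt.
  rewrite -(big_mkord xpredT (fun i => ampl_count F i * (2 ^ i - 1))%N) in Htot.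
  have Hn2 : (2 * (n %/ 2))%N = n.
    have : (n %% 2 = 0)%N by rewrite modn2 (negbTE Hev).
    lia.
  have Hr := @reidx (fun i => ampl_count F i * (2 ^ i - 1))%N (n %/ 2)
    (fun i Hi => ltac:(by rewrite /= Hpar)).
  rewrite Hn2 /= subnn muln0 add0n in Hr.
  rewrite Hr -subn1 in Htot; lia.
- move=> i Hi; rewrite leqNgt; apply/negP => /card_gt1P [b [b' [Hb Hb' Hbb]]].
  rewrite !inE in Hb Hb'; case/andP: Hb => Hb0 Ha; case/andP: Hb' => Hb0' Ha'.
  have := inter_card (V_closed (Hf b)) (V_closed (Hf b'))
    (fun w => core Hq Hapn Hb0 Hb0' Hbb).
  rewrite (amp_card (Hf b) Ha) (amp_card (Hf b') Ha') -expnD leq_exp2l //.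
  lia.
- move=> i j Hij /card_gt0P [b Hb] /card_gt0P [b' Hb'].
  rewrite !inE in Hb Hb'; case/andP: Hb => Hb0 Ha; case/andP: Hb' => Hb0' Ha'.
  have Hbb : b != b'.
    apply/eqP => E; subst b'; apply: Hij.
    have := amp_card (Hf b) Ha; rewrite (amp_card (Hf b) Ha') => /eqP.
    by rewrite eqn_exp2l // => /eqP.
  have := inter_card (V_closed (Hf b)) (V_closed (Hf b'))
    (fun w => core Hq Hapn Hb0 Hb0' Hbb).
  by rewrite (amp_card (Hf b) Ha) (amp_card (Hf b') Ha') -expnD leq_exp2l.
Qed.
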